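(* Let $G$ be a simple directed graph on $[n]$ and $\tau\subseteq[n]$ a directed clique of $G$. Then there exists a unique $\sigma\subseteq\tau$ such that $\sigma$ is a target-free clique in $G|_\tau$.
   Context: $\tau$ is a directed clique if its nodes can be ordered $1,\dots,|\tau|$ so that $i\to j$ whenever $i<j$. A clique is a nonempty set of nodes pairwise bidirectionally connected. In $G|_\tau$ (the induced subgraph), a target of $\sigma\subseteq\tau$ is a node $k\in\tau\setminus\sigma$ with $i\to k$ for all $i\in\sigma$; target-free means having no target. *)

(* Defs.v *)
From mathcomp Require Import all_boot.
Set Implicit Arguments. Unset Strict Implicit. Unset Printing Implicit Defensive.

(* A simple directed graph on [n] = {0,...,n-1}: an edge relation
   [G i j] meaning i -> j, with no self-loops. Bidirectional pairs allowed. *)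
Definition simple_digraph (n : nat) (G : rel 'I_n) : Prop :=
  forall i, ~~ G i i.

Definition directed_clique (n : nat) (G : rel 'I_n) (tau : {set 'I_n}) : Prop :=
  tau != set0 /\
  exists s : seq 'I_n,
    [/\ uniq s, s =i tau &
        forall (x0 : 'I_n) (i j : nat), i < j < size s ->
          G (nth x0 s i) (nth x0 s j)].

Definition clique (n : nat) (G : rel 'I_n) (sigma : {set 'I_n}) : Prop :=
  sigma != set0 /\
  forall i j, i \in sigma -> j \in sigma -> i != j -> G i j && G j i.

(* In G|_tau, a target of sigma (a subset of tau) is a node k in tau \ sigma
   with i -> k for all i in sigma. *)
Definition is_target (n : nat) (G : rel 'I_n) (tau sigma : {set 'I_n}) (k : 'I_n) : Prop :=
  k \in tau :\: sigma /\ forall i, i \in sigma -> G i k.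

Definition target_free (n : nat) (G : rel 'I_n) (tau sigma : {set 'I_n}) : Prop :=
  forall k, ~ is_target G tau sigma k.

(* Main.v *)
Require Import Defs.
From mathcomp Require Import all_boot.
Set Implicit Arguments. Unset Strict Implicit. Unset Printing Implicit Defensive.

Fixpoint gr (n : nat) (G : rel 'I_n) (s : seq 'I_n) : {set 'I_n} :=
  match s with
  | [::] => set0
  | x :: t => if [forall i in gr G t, G i x] then x |: gr G t else gr G t
  end.

Definition good (n : nat) (G : rel 'I_n) (tau sigma : {set 'I_n}) : Prop :=
  [/\ sigma \subset tau, clique G sigma & target_free G tau sigma].

Lemma key (n : nat) (G : rel 'I_n) (s : seq 'I_n) :
  uniq s -> pairwise G s -> s != [::] ->
  forall sigma, good G [set y in s] sigma <-> sigma = gr G s.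
Proof.
elim: s => [//|x t IH] /= /andP[xt ut] /andP[Gx pt] _ sigma.
have Gxt : forall y, y \in t -> G x y by move=> y yt; exact: (allP Gx).
case Ht: (t == [::]).
  move/eqP: Ht => Ht; subst t => /=.
  have -> : [forall i in (set0 : {set 'I_n}), G i x].
    by apply/forall_inP => i; rewrite in_set0.
  rewrite setU0.
  have -> : [set y in [:: x]] = [set x] by apply/setP => y; rewrite !inE.
  split.
    case=> sub [ne _] _; move: sub; rewrite subset1 => /orP[/eqP //|/eqP E].
    by rewrite E eqxx in ne.
  move=> ->; split => //.
    split; first by apply/set0Pn; exists x; rewrite inE.
    by move=> i j; rewrite !inE => /eqP -> /eqP ->; rewrite eqxx.
  by move=> k [] ; rewrite setDv inE.
have tne : t != [::] by rewrite Ht.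
have IH' := IH ut pt tne.
set S := gr G t.
have [Ssub [Sne Scl] Stf] : good G [set y in t] S by apply/IH'.
have xS : x \notin S.
  by apply/negP => /(subsetP Ssub); rewrite inE (negPf xt).
have tauE : [set y in x :: t] = x |: [set y in t].
  by apply/setP => y; rewrite !inE.
rewrite tauE.
split.
- case=> sub [ne cl] tf.
  set s' := sigma :\ x.
  have good' : good G [set y in t] s'.
    split.
    + apply/subsetP => y; rewrite !inE => /andP[yx ys].
      by move: (subsetP sub y ys); rewrite !inE (negPf yx).
    + split.
        apply/set0Pn.
        case: (set0Pn _ ne) => y ys.
        case: (eqVneq y x) => [yx|yx]; last by exists y; rewrite !inE yx.
        subst y.
        have [z zt] : exists z, z \in t.
          by move: tne; case: (t) => [|z t'] // _; exists z; rewrite inE eqxx.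
        case: (boolP [exists y, y \in s']) => [/existsP[w ww]|/existsPn nE]; first by exists w.
        exfalso; apply: (tf z); split.
          rewrite !inE zt orbT andbT.
          apply/negP => zs; move: (nE z); rewrite !inE zs andbT negbK => /eqP zx.
          by subst z; rewrite zt in xt.
        move=> i iin; case: (eqVneq i x) => [->|ix]; first by apply: Gxt.
        by move: (nE i); rewrite !inE ix iin.
      move=> i j; rewrite !inE => /andP[_ iS] /andP[_ jS]; exact: cl.
    + move=> k [kin kG]; apply: (tf k); split.
        move: kin; rewrite !inE negb_and negbK => /andP[/orP[kx|ks] kt].
          by move: kx kt => /eqP ->; rewrite (negPf xt).
        by rewrite ks kt orbT.
      move=> i iin; case: (eqVneq i x) => [->|ix].
        by apply: Gxt; move: kin; rewrite !inE => /andP[_ ->].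
      by apply: kG; rewrite !inE ix.
  have /IH' s'E := good'; rewrite -/S in s'E.
  rewrite /=; fold S.
  case: ifP => [/forall_inP allG|/negbT].
    case xs: (x \in sigma).
      by rewrite -s'E setD1K.
    exfalso; apply: (tf x); split; first by rewrite !inE eqxx xs.
    move=> i iin; apply: allG; rewrite -s'E !inE iin andbT.
    by apply/eqP => ix; subst i; rewrite iin in xs.
  rewrite negb_forall_in => /existsP[i /andP[iS nG]].
  case xs: (x \in sigma).
    exfalso.
    have iss : i \in sigma by move: iS; rewrite -s'E !inE => /andP[_ ->].
    have ix : i != x by apply/eqP => ix; subst i; rewrite iS in xS.
    by move: (cl i x iss xs ix) => /andP[H _]; rewrite H in nG.
  rewrite -s'E; apply/setP => y; rewrite !inE.
  by case: (eqVneq y x) => [->|] //=; rewrite xs.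
- move=> ->; rewrite /=; fold S.
  case: ifP => [/forall_inP allG|/negbT].
  + split.
    * by apply: setUS.
    * split; first by apply/set0Pn; exists x; rewrite !inE eqxx.
      move=> i j; rewrite !inE => /orP[/eqP->|iS] /orP[/eqP->|jS].
      - by rewrite eqxx.
      - move=> _; rewrite allG // andbT; apply: Gxt.
        by move: (subsetP Ssub j jS); rewrite inE.
      - move=> _; rewrite allG //=; apply: Gxt.
        by move: (subsetP Ssub i iS); rewrite inE.
      - exact: Scl.
    * move=> k [kin kG]; apply: (Stf k); split.
        move: kin; rewrite !inE negb_or => /andP[/andP[kx ks] /orP[/eqP kx'|kt]].
          by rewrite kx' eqxx in kx.
        by rewrite ks kt.
      by move=> i iS; apply: kG; rewrite !inE iS orbT.
  + rewrite negb_forall_in => /existsP[i /andP[iS nG]].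
    split; first by apply: subset_trans Ssub (subsetU1 _ _).
      by split.
    move=> k [kin kG].
    move: kin; rewrite !inE => /andP[ks /orP[/eqP kx|kt]].
      by subst k; rewrite kG in nG.
    by apply: (Stf k); split; [rewrite !inE ks kt|].
Qed.

Theorem lemma5 (n : nat) (G : rel 'I_n) (tau : {set 'I_n}) :
  simple_digraph G -> directed_clique G tau ->
  exists! sigma : {set 'I_n},
    [/\ sigma \subset tau, clique G sigma & target_free G tau sigma].
Proof.
move=> _ [ne [s [us stau fw]]].
have tauE : tau = [set y in s] by apply/setP => y; rewrite inE stau.
have sne : s != [::].
  apply: contraNneq ne => s0; apply/eqP/setP => y; rewrite -stau s0 inE.
  by [].
case: s us stau fw tauE sne => [//|x0 t] us stau fw tauE sne.
have pw : pairwise G (x0 :: t).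
  apply/(pairwiseP x0) => i j ilt jlt ij; apply: fw; rewrite ij.
  exact: jlt.
rewrite tauE.
exists (gr G (x0 :: t)); split.
  by apply/(key us pw sne).
by move=> sig Hs; apply/esym; apply/(key us pw sne).
Qed.
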